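(* Suppose treatment assignment is ignorable given covariates $\mathbf{x}$ with aliasing by the function $\beta(\mathbf{x},\mathbf{w})$. Let $\mathbf{e}(\mathbf{x})=(\Pr(Z_1=1\mid\mathbf{x}),\ldots,\Pr(Z_G=1\mid\mathbf{x}))$ and let $\mathbf{f}(\cdot)$ be any (measurable) function. Then (a) $\mathbf{Z}$ is conditionally independent of $\{r_1-\beta(\mathbf{x},\mathbf{w}_1),\ldots,r_G-\beta(\mathbf{x},\mathbf{w}_G)\}$ given $\{\mathbf{e}(\mathbf{x}),\mathbf{f}(\mathbf{x})\}$; (b) $0<\Pr\{Z_g=1\mid \mathbf{e}(\mathbf{x}),\mathbf{f}(\mathbf{x})\}<1$ for $g=1,\ldots,G$; (c) if in addition the contrast $h_1,\ldots,h_G$ (constants with $\sum_g h_g=0$, not all zero) is not aliased with $\beta(\mathbf{x},\mathbf{w})$, then $$\mathrm{E}\Big\{\sum_{g=1}^G h_g r_g\,\Big|\,\mathbf{e}(\mathbf{x}),\mathbf{f}(\mathbf{x})\Big\}=\sum_{g=1}^G h_g\,\mathrm{E}\big\{R\,\big|\,Z_g=1,\mathbf{e}(\mathbf{x}),\mathbf{f}(\mathbf{x})\big\}.$$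
   Context: There are $G$ treatment groups. Each individual has a random vector $\mathbf{Z}=(Z_1,\ldots,Z_G)$ with $Z_g\in\{0,1\}$ and $\sum_{g=1}^G Z_g=1$. Each individual has observed covariates $\mathbf{x}$ and observed ''eligibility'' covariates $\mathbf{w}$; there are fixed distinct values $\mathbf{w}_1,\ldots,\mathbf{w}_G$ such that $Z_g=1$ if and only if $\mathbf{w}=\mathbf{w}_g$. Each individual has potential responses $r_1,\ldots,r_G$, and the observed response is $R=\sum_{g=1}^G Z_g r_g$. All expectations are assumed to exist. Definition (ignorable with aliasing): treatment assignment is ignorable given $\mathbf{x}$ with aliasing by a function $\beta(\mathbf{x},\mathbf{w})$ if (i) $\mathbf{Z}$ is conditionally independent of $\{r_1-\beta(\mathbf{x},\mathbf{w}_1),\ldots,r_G-\beta(\mathbf{x},\mathbf{w}_G)\}$ given $\mathbf{x}$, and (ii) $0<\Pr(Z_g=1\mid\mathbf{x})<1$ for $g=1,\ldots,G$. Definition (not aliased): a contrast $h_1,\ldots,h_G$ is not aliased with $\beta(\mathbf{x},\mathbf{w})$ if $\sum_{g=1}^G h_g\,\beta(\mathbf{x},\mathbf{w}_g)=0$ for all $\mathbf{x}$. *)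

(* Defs.v *)
From HB Require Import structures.
From mathcomp Require Import all_boot all_order all_algebra.
From mathcomp Require Import all_classical all_reals all_analysis.
Set Implicit Arguments. Unset Strict Implicit. Unset Printing Implicit Defensive.
Import Order.TTheory GRing.Theory Num.Theory.
Local Open Scope classical_set_scope.
Local Open Scope ring_scope.

Definition sigma_of {T : Type} {d} {U : measurableType d} (h : T -> U)
  : set (set T) := [set h @^-1` B | B in measurable].

Definition Gmeasurable {T : Type} {R : realType} (Gs : set (set T)) (Y : T -> R)
  : Prop := forall B : set R, measurable B -> Gs (Y @^-1` B).

Definition cond_exp_version {d} {T : measurableType d} {R : realType}
  (P : probability T R) (Gs : set (set T)) (X Y : T -> R) : Prop :=
  [/\ Gmeasurable Gs Y, P.-integrable setT (EFin \o Y) &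
      forall A, Gs A ->
        (\int[P]_(w in A) (Y w)%:E = \int[P]_(w in A) (X w)%:E)%E].

Definition cond_prob_version {d} {T : measurableType d} {R : realType}
  (P : probability T R) (Gs : set (set T)) (A : set T) (p : T -> R) : Prop :=
  cond_exp_version P Gs (\1_A) p.

Definition cond_exp_event_version {d} {T : measurableType d} {R : realType}
  (P : probability T R) (Gs : set (set T)) (A : set T) (X m : T -> R) : Prop :=
  [/\ Gmeasurable Gs m, P.-integrable A (EFin \o m) &
      forall B, Gs B ->
        (\int[P]_(w in B `&` A) (m w)%:E = \int[P]_(w in B `&` A) (X w)%:E)%E].

Definition cond_indep {d} {T : measurableType d} {R : realType}
  (P : probability T R) (F1 F2 Gs : set (set T)) : Prop :=
  forall A1 A2, F1 A1 -> F2 A2 ->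
  forall p1 p2 : T -> R,
    cond_prob_version P Gs A1 p1 -> cond_prob_version P Gs A2 p2 ->
    cond_prob_version P Gs (A1 `&` A2) (p1 \* p2).

(* sigma-algebra generated by the treatment indicator Z (coded as the index
   of the unique g with Z_g = 1; 'I_G carries the discrete sigma-algebra) *)
Definition sigma_Z {T : Type} {G : nat} (Z : T -> 'I_G) : set (set T) :=
  [set Z @^-1` S | S in [set: set 'I_G]].

Definition sigma_resid {T : Type} {R : realType} {G : nat} {dX}
  {X : measurableType dX} {W : Type}
  (x : T -> X) (r : 'I_G -> T -> R) (beta : X -> W -> R) (ws : 'I_G -> W)
  : set (set T) :=
  <<s [set A | exists g : 'I_G, exists B : set R, measurable B /\
          A = (fun t => r g t - beta (x t) (ws g)) @^-1` B] >>.

Definition sigma_ef {T : Type} {R : realType} {G : nat} {dX}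
  {X : measurableType dX} {dY} {Y : measurableType dY}
  (x : T -> X) (e : 'I_G -> X -> R) (f : X -> Y) : set (set T) :=
  <<s [set A | (exists g : 'I_G, exists B : set R, measurable B /\
                   A = (e g \o x) @^-1` B) \/
               (exists B : set Y, measurable B /\ A = (f \o x) @^-1` B)] >>.

Definition ignorable_aliasing {d} {T : measurableType d} {R : realType}
  (P : probability T R) {G : nat} {dX} {X : measurableType dX} {W : Type}
  (x : T -> X) (Z : T -> 'I_G) (r : 'I_G -> T -> R) (beta : X -> W -> R)
  (ws : 'I_G -> W) : Prop :=
  cond_indep P (sigma_Z Z) (sigma_resid x r beta ws) (sigma_of x) /\
  forall g : 'I_G, forall p : T -> R,
    cond_prob_version P (sigma_of x) [set t | Z t = g] p ->
    {ae P, forall t, 0 < p t < 1}.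

Definition not_aliased {R : realType} {G : nat} {dX} {X : measurableType dX}
  {W : Type} (h : 'I_G -> R) (beta : X -> W -> R) (ws : 'I_G -> W) : Prop :=
  forall a : X, \sum_(g < G) h g * beta a (ws g) = 0.

(* Main.v *)
Require Import Defs.
From HB Require Import structures.
From mathcomp Require Import all_boot all_order all_algebra.
From mathcomp Require Import all_classical all_reals all_analysis.
From mathcomp Require Import measurable_realfun.
From mathcomp Require Import lra.
Import Order.TTheory GRing.Theory Num.Theory.
Local Open Scope classical_set_scope.
Local Open Scope ring_scope.
Set Implicit Arguments. Unset Strict Implicit.

Section pf.
Context d d' (T : measurableType d) (U : measurableType d') (R : realType).
Variables (m : {finite_measure set T -> \bar R}) (f : T -> U).
Definition pf (mf : measurable_fun setT f) : set U -> \bar R :=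
  fun A => m (f @^-1` A).
Variable mf : measurable_fun setT f.
Let mpre A : measurable A -> measurable (f @^-1` A).
Proof. by move=> mA; rewrite -[X in measurable X]setTI; exact: mf. Qed.
Let pf0 : pf mf set0 = 0%E.
Proof. by rewrite /pf preimage_set0 measure0. Qed.
Let pf_ge0 A : (0 <= pf mf A)%E.
Proof. by apply: measure_ge0. Qed.
Let pf_sigma_additive : semi_sigma_additive (pf mf).
Proof.
move=> F mF tF mUF; rewrite /pf preimage_bigcup.
apply: measure_semi_sigma_additive.
- by move=> n; exact: mpre.
- apply/trivIsetP => /= i j _ _ ij; rewrite -preimage_setI.
  by move/trivIsetP : tF => /(_ _ _ _ _ ij) ->//; rewrite preimage_set0.
- by rewrite -preimage_bigcup; exact: mpre.
Qed.
HB.instance Definition _ := isMeasure.Build _ _ _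
  (pf mf) pf0 pf_ge0 pf_sigma_additive.
Let pf_fin : fin_num_fun (pf mf).
Proof. by move=> A mA; rewrite /pf fin_num_measure//; exact: mpre. Qed.
HB.instance Definition _ := Measure_isFinite.Build _ _ _ (pf mf) pf_fin.

Lemma pf_ge0_integral D (q : U -> \bar R) : measurable D ->
  measurable_fun D q -> (forall y, (0 <= q y)%E) ->
  (\int[pf mf]_(y in D) q y = \int[m]_(x in f @^-1` D) (q \o f) x)%E.
Proof. by move=> mD mq q0; apply: ge0_integral_pushforward => // y _; exact: q0. Qed.
Lemma pf_integral D (q : U -> \bar R) : measurable D ->
  measurable_fun setT q -> m.-integrable (f @^-1` D) (q \o f) ->
  (\int[pf mf]_(y in D) q y = \int[m]_(x in f @^-1` D) (q \o f) x)%E.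
Proof. by move=> mD mq iq; exact: integral_pushforward. Qed.
End pf.

Section maxeM.
Context (R : realType).
Lemma maxeM (a b : R) : 0 <= b ->
  Order.max ((a * b)%:E) 0%E = (Order.max (a%:E) 0%E * b%:E)%E.
Proof.
move=> b0; have [a0|a0] := leP 0 a.
  by rewrite !max_l ?lee_fin ?mulr_ge0.
rewrite !max_r ?mul0e// lee_fin ?(ltW a0)//.
by rewrite mulr_le0_ge0 // ltW.
Qed.
Lemma maxeNM (a b : R) : 0 <= b ->
  Order.max (- (a * b)%:E)%E 0%E = (Order.max (- a%:E)%E 0%E * b%:E)%E.
Proof. by move=> b0; rewrite -!EFinN -mulNr maxeM. Qed.
End maxeM.

Section dens.
Context d (T : measurableType d) (R : realType) (P : probability T R).
Definition dens (f : T -> R) (f0 : forall t, 0 <= f t)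
  (intf : P.-integrable setT (EFin \o f)) : set T -> \bar R :=
  fun A => (\int[P]_(t in A) (f t)%:E)%E.
Variables (f : T -> R) (f0 : forall t, 0 <= f t)
  (intf : P.-integrable setT (EFin \o f)).
Let mf : measurable_fun setT (EFin \o f). Proof. exact: measurable_int intf. Qed.
Let dens0 : dens f0 intf set0 = 0%E.
Proof. by rewrite /dens integral_set0. Qed.
Let dens_ge0 A : (0 <= dens f0 intf A)%E.
Proof. by apply: integral_ge0 => t _; rewrite lee_fin. Qed.
Let dens_ssa : semi_sigma_additive (dens f0 intf).
Proof. apply: semi_sigma_additive_nng_induced => // t; by rewrite /= lee_fin. Qed.
HB.instance Definition _ := isMeasure.Build _ _ _ (dens f0 intf)
  dens0 dens_ge0 dens_ssa.
Let dens_fin : fin_num_fun (dens f0 intf).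
Proof. by move=> A mA; apply: integrable_fin_num => //; exact: integrableS intf. Qed.
HB.instance Definition _ := Measure_isFinite.Build _ _ _ (dens f0 intf) dens_fin.

Lemma dens_dom : dens f0 intf `<< P.
Proof.
move=> N hN A mA AN; rewrite /dens null_set_integral//; last exact: hN.
exact: measurable_funS mf.
Qed.

Lemma dens_integral_ge0 (q : T -> \bar R) E : measurable E ->
  measurable_fun setT q -> (forall t, (0 <= q t)%E) ->
  (\int[dens f0 intf]_(t in E) q t = \int[P]_(t in E) (q t * (f t)%:E))%E.
Proof.
move=> mE mq q0.
set phi := Radon_Nikodym_SigmaFinite.f (dens f0 intf) P.
have mphi : measurable_fun setT phi.
  exact: measurable_int (Radon_Nikodym_SigmaFinite.f_integrable dens_dom).
have ae : ae_eq P setT (EFin \o f) phi.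
  apply: integral_ae_eq => // B _ mB.
  by rewrite -Radon_Nikodym_SigmaFinite.f_integral//; exact: dens_dom.
rewrite -(Radon_Nikodym_SigmaFinite.change_of_variables dens_dom) //; last first.
  exact: measurable_funS mq.
apply: ae_eq_integral => //.
- by apply: emeasurable_funM; exact: measurable_funTS.
- by apply: emeasurable_funM; exact: measurable_funTS.
- apply: ae_eqe_mul2l; apply: ae_eq_subset (ae_eq_sym ae) => //.
Qed.
Lemma dens_int (q : T -> R) E : measurable E -> measurable_fun setT q ->
  P.-integrable E (fun t => (q t * f t)%:E) ->
  (dens f0 intf).-integrable E (EFin \o q) /\
  (\int[dens f0 intf]_(t in E) (q t)%:E = \int[P]_(t in E) (q t * f t)%:E)%E.
Proof.
move=> mE mq iq.
have mEq : measurable_fun setT (EFin \o q) by exact/measurable_EFinP.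
split.
  apply/integrableP; split; first exact: measurable_funTS.
  rewrite dens_integral_ge0 //; try (by move=> t; exact: abse_ge0);
    try (exact: measurableT_comp).
  suff -> : (\int[P]_(t in E) (`|(EFin \o q) t| * (f t)%:E) =
            \int[P]_(t in E) `|(q t * f t)%:E|)%E by case/integrableP: iq.
  apply: eq_integral => t _.
  change ((`|(q t)%:E| * (f t)%:E)%E = `|(q t * f t)%:E|%E).
  by rewrite !abse_EFin -EFinM normrM (ger0_norm (f0 t)).
rewrite integralE [RHS]integralE.
rewrite !dens_integral_ge0 //; try (by move=> t; exact: funepos_ge0);
  try (by move=> t; exact: funeneg_ge0);
  try (exact: measurable_funepos); try (exact: measurable_funeneg).
congr (_ - _)%E; apply: eq_integral => t _.
  by rewrite !funeposE /= maxeM.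
by rewrite !funenegE /= maxeNM.
Qed.
End dens.


Section aux.
Context d (T : measurableType d) (R : realType) (P : probability T R).

Lemma null_ae (C : set T) : measurable C -> P C = 0%E -> {ae P, forall t, ~ C t}.
Proof. by move=> mC C0; exists C; split => // t /= /contrapT. Qed.

Lemma ae_not_null (C : set T) : measurable C -> {ae P, forall t, ~ C t} -> P C = 0%E.
Proof.
move=> mC [N [mN N0 hN]]; apply: (subset_measure0 mC mN) => // t Ct.
by apply: hN => /=; apply.
Qed.

Lemma pos_int0 (D : set T) (u : T -> R) : measurable D ->
  measurable_fun D u -> {ae P, forall t, D t -> 0 < u t} ->
  (\int[P]_(t in D) (u t)%:E = 0)%E -> P D = 0%E.
Proof.
move=> mD mu hu h0; apply: ae_not_null => //.
have mEu : measurable_fun D (EFin \o u) by exact/measurable_EFinP.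
have habs : (\int[P]_(t in D) `|(EFin \o u) t| = 0)%E.
  rewrite -h0; apply: ae_eq_integral => //.
  - exact: measurableT_comp.
  - by apply: filterS hu => t h Dt; apply: gee0_abs; rewrite lee_fin ltW// h.
have := (ae_eq_integral_abs P mD mEu).1 habs.
apply: filterS2 hu => t h1 h2 Dt.
have ut0 : u t = 0 by apply: EFin_inj; exact: (h2 Dt).
by have := h1 Dt; rewrite ut0 ltxx.
Qed.

End aux.

Section subsigma.
Context d (T : measurableType d) (R : realType) (P : probability T R).
Variables (S : set (set T)) (hS : sigma_algebra setT S)
  (hsub : S `<=` measurable).
Local Notation T' := (g_sigma_algebraType S).

Lemma measT'E : (measurable : set (set T')) = S.
Proof. exact: measurable_g_measurableTypeE. Qed.

Lemma S_setT : S setT.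
Proof. by case: hS => h0 hC _; rewrite -(setD0 setT); exact: hC. Qed.

Definition idS : T -> T' := id.
Lemma midS : measurable_fun setT idS.
Proof. by move=> _ B; rewrite measT'E setTI => /hsub. Qed.

Lemma GmeasP (Y : T -> R) : Gmeasurable S Y <-> measurable_fun setT (Y : T' -> R).
Proof.
split=> [h _ B mB|h B mB]; first by rewrite setTI measT'E; exact: h.
by have := h measurableT B mB; rewrite setTI measT'E.
Qed.

Lemma mT'T dU (U : measurableType dU) (Y : T' -> U) :
  measurable_fun setT Y -> measurable_fun setT (Y : T -> U).
Proof.
move=> h _ B mB; have := h measurableT B mB.
by rewrite !setTI measT'E => /hsub.
Qed.

Lemma Gmeas_mT (Y : T -> R) : Gmeasurable S Y -> measurable_fun setT Y.
Proof. by move/GmeasP; exact: mT'T. Qed.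

Lemma Gmeas_mTE (Y : T -> R) D : Gmeasurable S Y ->
  measurable_fun D (EFin \o Y).
Proof. by move/Gmeas_mT => h; apply/measurable_EFinP; exact: measurable_funTS. Qed.

Definition mS := pf P midS.

Lemma intS (Y : T' -> \bar R) C : S C -> measurable_fun setT Y ->
  (forall t, 0 <= Y t)%E ->
  (\int[mS]_(t in C) Y t = \int[P]_(t in C) Y t)%E.
Proof.
move=> SC mY Y0; rewrite /mS pf_ge0_integral //; first by rewrite measT'E.
exact: measurable_funTS.
Qed.

Lemma version_ge0 (X : T -> R) (X0 : forall t, 0 <= X t)
  (iX : P.-integrable setT (EFin \o X)) :
  exists Y : T -> R, [/\ cond_exp_version P S X Y, (forall t, 0 <= Y t) &
    forall q : T -> R, Gmeasurable S q -> (forall t, 0 <= q t) ->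
    forall C, S C ->
      (\int[P]_(t in C) ((q t)%:E * (Y t)%:E) =
       \int[P]_(t in C) ((q t)%:E * (X t)%:E))%E].
Proof.
pose nu := pf (dens X0 iX) midS.
have numu : nu `<< mS.
  move=> N hN A mA AN; rewrite /nu /pf /dens /=.
  apply: null_set_integral.
  - by apply: hsub; rewrite -measT'E.
  - by apply: measurable_funTS; exact: measurable_int iX.
  - exact: hN.
pose phi := Radon_Nikodym_SigmaFinite.f nu mS.
have phi0 := Radon_Nikodym_SigmaFinite.f_ge0 numu.
have phifin := Radon_Nikodym_SigmaFinite.f_fin_num numu.
have phiint := Radon_Nikodym_SigmaFinite.f_integrable numu.
have mphi : measurable_fun setT phi := measurable_int _ phiint.
have phiE : (EFin \o (fine \o phi)) = phi.
  by apply/funext => t /=; rewrite fineK// phifin.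
have mphiT : measurable_fun setT (phi : T -> \bar R) by exact: mT'T.
exists (fine \o phi); split.
- split.
  + by apply/GmeasP; apply: measurableT_comp => //; exact: fine_measurable.
  + rewrite phiE; apply/integrableP; split => //.
    rewrite -intS//; first by case/integrableP: phiint.
    * exact: S_setT.
    * exact: measurableT_comp.
  + move=> C SC; rewrite (_ : (fun w => (((fine \o phi) w)%:E)) = phi) //.
    rewrite -intS// -Radon_Nikodym_SigmaFinite.f_integral//.
    by rewrite measT'E.
- by move=> t /=; apply: fine_ge0; exact: phi0.
- move=> q Sq q0 C SC.
  have mq : measurable_fun setT (EFin \o (q : T' -> R)).
    by apply/measurable_EFinP; exact/GmeasP.
  transitivity (\int[P]_(t in C) ((q t)%:E * phi t))%E.
    by apply: eq_integral => t _; rewrite /= fineK// phifin.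
  rewrite -intS//; last 2 first.
    + exact: emeasurable_funM.
    + by move=> t; rewrite mule_ge0// lee_fin.
  have mC : measurable (C : set T') by rewrite measT'E.
  rewrite (Radon_Nikodym_SigmaFinite.change_of_variables numu)//;
    try (by move=> t; rewrite lee_fin); try (exact: measurable_funTS).
  rewrite /nu pf_ge0_integral//;
    try (by move=> t; rewrite lee_fin); try (exact: measurable_funTS).
  rewrite dens_integral_ge0//; try (by apply: hsub);
    try (exact: (mT'T mq)); by move=> t; rewrite lee_fin.
Qed.

End subsigma.


Section realaux.
Context (R : realType).
Lemma maxpm (x : R) : x = Num.max x 0 - Num.max (- x) 0.
Proof. by rewrite !maxEle; case: ifP; case: ifP => ? ?; lra. Qed.
Lemma maxp_ge0 (x : R) : 0 <= Num.max x 0.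
Proof. by rewrite !maxEle; case: ifP => ?; lra. Qed.
Lemma maxp_le (x : R) : `|Num.max x 0| <= `|x|.
Proof.
rewrite !maxEle; case: ifP => h; first by rewrite normr0.
by rewrite ger0_norm ?ler_norm //; lra.
Qed.
End realaux.

Section uniq.
Context d (T : measurableType d) (R : realType) (P : probability T R).

Lemma int_indic_setI (C A : set T) (f : T -> \bar R) :
  (\int[P]_(t in C `&` A) f t = \int[P]_(t in C) (f t * (\1_A t)%:E))%E.
Proof. by rewrite integral_mkcondr; apply: eq_integral => t _; rewrite epatch_indic. Qed.

Lemma int_EFinM (C : set T) (f g : T -> R) :
  (\int[P]_(t in C) ((f t)%:E * (g t)%:E) = \int[P]_(t in C) (f t * g t)%:E)%E.
Proof. by apply: eq_integral => t _; rewrite EFinM. Qed.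

Variables (S : set (set T)) (hS : sigma_algebra setT S)
  (hsub : S `<=` measurable).

Lemma S_lt (m1 m2 : T -> R) : Gmeasurable S m1 -> Gmeasurable S m2 ->
  S [set t | m2 t < m1 t].
Proof.
move=> /(GmeasP hS) h1 /(GmeasP hS) h2.
have : Gmeasurable S (fun t => m1 t - m2 t).
  by apply/(GmeasP hS); exact: measurable_funB.
move=> /(_ `]0, +oo[%classic (measurable_itv _)).
rewrite (_ : _ @^-1` _ = [set t | m2 t < m1 t]) //.
by apply/seteqP; split => t /=; rewrite in_itv /= andbT subr_gt0.
Qed.

Lemma EU1 (A : set T) (mA : measurable A)
  (hA : forall C, S C -> P (C `&` A) = 0%E -> P C = 0%E)
  (m1 m2 : T -> R) : Gmeasurable S m1 -> Gmeasurable S m2 ->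
  P.-integrable A (EFin \o m1) -> P.-integrable A (EFin \o m2) ->
  (forall B, S B -> (\int[P]_(t in B `&` A) (m1 t)%:E =
                     \int[P]_(t in B `&` A) (m2 t)%:E)%E) ->
  P [set t | m2 t < m1 t] = 0%E.
Proof.
move=> g1 g2 i1 i2 h.
have SC := S_lt g1 g2.
apply: hA => //.
have mCA : measurable ([set t | m2 t < m1 t] `&` A).
  by apply: measurableI => //; exact: hsub.
apply: (@pos_int0 _ _ _ P _ (fun t => m1 t - m2 t) mCA).
- have h1 := Gmeas_mT hS hsub g1; have h2 := Gmeas_mT hS hsub g2.
  by apply: measurable_funB; exact: measurable_funTS.
- by apply: aeW => t [/= lt _]; rewrite subr_gt0.
- have iS1 : P.-integrable ([set t | m2 t < m1 t] `&` A) (EFin \o m1).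
    by apply: integrableS i1 => //; exact: subIsetr.
  have iS2 : P.-integrable ([set t | m2 t < m1 t] `&` A) (EFin \o m2).
    by apply: integrableS i2 => //; exact: subIsetr.
  rewrite (_ : (fun t => ((m1 t - m2 t)%:E)) = ((EFin \o m1) \- (EFin \o m2))%E);
    last by apply/funext.
  rewrite integralB // h // subee // integrable_fin_num //.
Qed.

Lemma EU (A : set T) (mA : measurable A)
  (hA : forall C, S C -> P (C `&` A) = 0%E -> P C = 0%E)
  (m1 m2 : T -> R) : Gmeasurable S m1 -> Gmeasurable S m2 ->
  P.-integrable A (EFin \o m1) -> P.-integrable A (EFin \o m2) ->
  (forall B, S B -> (\int[P]_(t in B `&` A) (m1 t)%:E =
                     \int[P]_(t in B `&` A) (m2 t)%:E)%E) ->
  {ae P, forall t, m1 t = m2 t}.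
Proof.
move=> g1 g2 i1 i2 h.
have n1 := EU1 mA hA g1 g2 i1 i2 h.
have n2 := EU1 mA hA g2 g1 i2 i1 (fun B SB => esym (h B SB)).
have := null_ae (hsub (S_lt g1 g2)) n1; have := null_ae (hsub (S_lt g2 g1)) n2.
apply: filterS2 => t /negP; rewrite -leNgt => a /negP; rewrite -leNgt => b.
by apply/eqP; rewrite eq_le a b.
Qed.

Lemma version_uniq (X Y1 Y2 : T -> R) : cond_exp_version P S X Y1 ->
  cond_exp_version P S X Y2 -> {ae P, forall t, Y1 t = Y2 t}.
Proof.
case=> g1 i1 h1 [g2 i2 h2]; apply: (EU measurableT) => //.
- by move=> C _; rewrite setIT.
- by move=> B SB; rewrite setIT h1 // h2.
Qed.

Lemma version_mT (X Y : T -> R) : cond_exp_version P S X Y -> forall D,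
  measurable_fun D (EFin \o Y).
Proof. by case=> gY _ _ D; apply: (Gmeas_mTE hS hsub). Qed.

Lemma po_ge0 (X Y q : T -> R) (C : set T) : (forall t, 0 <= X t) ->
  P.-integrable setT (EFin \o X) -> cond_exp_version P S X Y ->
  Gmeasurable S q -> (forall t, 0 <= q t) -> S C ->
  (\int[P]_(t in C) ((q t)%:E * (Y t)%:E) =
   \int[P]_(t in C) ((q t)%:E * (X t)%:E))%E.
Proof.
move=> X0 iX hY gq q0 SC.
have [Yc [hYc Yc0 po]] := version_ge0 hS hsub X0 iX.
rewrite -(po q gq q0 C SC).
have mC := hsub SC.
apply: ae_eq_integral => //.
- by apply: emeasurable_funM; [exact: (Gmeas_mTE hS hsub gq)|exact: (version_mT (D:=C) hY)].
- by apply: emeasurable_funM; [exact: (Gmeas_mTE hS hsub gq)|exact: (version_mT (D:=C) hYc)].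
- by have := version_uniq hY hYc; apply: filterS => t -> _.
Qed.

End uniq.


Section signed.
Context d (T : measurableType d) (R : realType) (P : probability T R).
Variables (S : set (set T)) (hS : sigma_algebra setT S)
  (hsub : S `<=` measurable).

Lemma int_mul_bounded (f q : T -> R) (C : set T) : measurable C ->
  P.-integrable setT (EFin \o f) -> measurable_fun setT q ->
  (forall t, 0 <= q t <= 1) ->
  P.-integrable C (fun t => (q t)%:E * (f t)%:E)%E.
Proof.
move=> mC iF mq q01.
have iFC : P.-integrable C (EFin \o f) by exact: integrableS iF.
apply: le_integrable iFC; [exact: mC| |move=> t _].
  apply: emeasurable_funM; apply/measurable_EFinP; apply: measurable_funTS => //.
  exact/measurable_EFinP/(measurable_int _ iF).
rewrite -EFinM !abse_EFin lee_fin normrM.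
case/andP: (q01 t) => a b; rewrite (ger0_norm a).
by apply: ler_piMl.
Qed.

Lemma version_signed (X : T -> R) (iX : P.-integrable setT (EFin \o X)) :
  exists Y : T -> R, cond_exp_version P S X Y /\
   forall q : T -> R, Gmeasurable S q -> (forall t, 0 <= q t <= 1) ->
   forall C, S C ->
     (\int[P]_(t in C) ((q t)%:E * (Y t)%:E) =
      \int[P]_(t in C) ((q t)%:E * (X t)%:E))%E.
Proof.
have mX : measurable_fun setT X.
  by apply/measurable_EFinP; exact: measurable_int iX.
pose Xp t := Num.max (X t) 0. pose Xm t := Num.max (- X t) 0.
have mXp : measurable_fun setT Xp by apply: measurable_maxr.
have mXm : measurable_fun setT Xm.
  by apply: measurable_maxr => //; exact: measurableT_comp.
have iXp : P.-integrable setT (EFin \o Xp).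
  apply: le_integrable iX; [by []|exact/measurable_EFinP|move=> t _].
  by change (`|(Xp t)%:E| <= `|(X t)%:E|)%E; rewrite !abse_EFin lee_fin maxp_le.
have iXm : P.-integrable setT (EFin \o Xm).
  apply: le_integrable iX; [by []|exact/measurable_EFinP|move=> t _].
  by change (`|(Xm t)%:E| <= `|(X t)%:E|)%E; rewrite !abse_EFin lee_fin -(normrN (X t)) maxp_le.
have [Yp [hYp Yp0 pop]] := version_ge0 hS hsub (fun t => maxp_ge0 (X t)) iXp.
have [Ym [hYm Ym0 pom]] := version_ge0 hS hsub (fun t => maxp_ge0 (- X t)) iXm.
have hYp' := hYp; have hYm' := hYm.
case: hYp' => gp ip hp; case: hYm' => gm im hm.
exists (fun t => Yp t - Ym t); split.
- split.
  + by apply/(GmeasP hS); apply: measurable_funB; exact/(GmeasP hS).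
  + rewrite (_ : EFin \o _ = ((EFin \o Yp) \- (EFin \o Ym))%E) //.
    exact: integrableB.
  + move=> C SC; have mC := hsub SC.
    transitivity (\int[P]_(w in C) ((EFin \o Yp) \- (EFin \o Ym))%E w)%E.
      by [].
    rewrite integralB //; try exact: integrableS ip; try exact: integrableS im.
    rewrite (hp C SC) (hm C SC) -integralB //;
      try exact: integrableS iXp; try exact: integrableS iXm.
    by apply: eq_integral => t _; rewrite /= -EFinB -maxpm.
- move=> q gq q01 C SC; have mC := hsub SC.
  have mq := Gmeas_mT hS hsub gq.
  have q0 t : 0 <= q t by case/andP: (q01 t).
  transitivity (\int[P]_(t in C)
    ((fun t => (q t)%:E * (Yp t)%:E) \- (fun t => (q t)%:E * (Ym t)%:E))%E t)%E.
    by apply: eq_integral => t _; rewrite /= -!EFinM -EFinB mulrBr.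
  rewrite integralB //; try exact: int_mul_bounded.
  rewrite (pop q gq q0 C SC) (pom q gq q0 C SC) -integralB //;
    try exact: int_mul_bounded.
  by apply: eq_integral => t _; rewrite /= -!EFinM -EFinB -mulrBr -maxpm.
Qed.

Lemma po_signed (X Y q : T -> R) (C : set T) :
  P.-integrable setT (EFin \o X) -> cond_exp_version P S X Y ->
  Gmeasurable S q -> (forall t, 0 <= q t <= 1) -> S C ->
  (\int[P]_(t in C) ((q t)%:E * (Y t)%:E) =
   \int[P]_(t in C) ((q t)%:E * (X t)%:E))%E.
Proof.
move=> iX hY gq q01 SC; have mC := hsub SC.
have [Yc [hYc po]] := version_signed iX.
rewrite -(po q gq q01 C SC).
apply: ae_eq_integral => //.
- by apply: emeasurable_funM; [exact: (Gmeas_mTE hS hsub gq)|exact: (version_mT hS hsub (D:=C) hY)].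
- by apply: emeasurable_funM; [exact: (Gmeas_mTE hS hsub gq)|exact: (version_mT hS hsub (D:=C) hYc)].
- by have := version_uniq hS hsub hY hYc; apply: filterS => t -> _.
Qed.

Lemma po_ind (X Y q : T -> R) (C : set T) : (forall t, 0 <= X t <= 1) ->
  P.-integrable setT (EFin \o X) -> cond_exp_version P S X Y ->
  Gmeasurable S q -> P.-integrable setT (EFin \o q) -> S C ->
  (\int[P]_(t in C) ((q t)%:E * (Y t)%:E) =
   \int[P]_(t in C) ((q t)%:E * (X t)%:E))%E.
Proof.
move=> X01 iX hY gq iq SC; have mC := hsub SC.
have X0 t : 0 <= X t by case/andP: (X01 t).
have [Yc [hYc Yc0 po]] := version_ge0 hS hsub X0 iX.
have mq := Gmeas_mT hS hsub gq.
have mX : measurable_fun setT X.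
  by apply/measurable_EFinP; exact: measurable_int iX.
have mYc := version_mT hS hsub (D:=setT) hYc.
transitivity (\int[P]_(t in C) ((q t)%:E * (Yc t)%:E))%E.
  apply: ae_eq_integral => //.
  - by apply: emeasurable_funM; [exact: (Gmeas_mTE hS hsub gq)|exact: (version_mT hS hsub (D:=C) hY)].
  - by apply: emeasurable_funM; [exact: (Gmeas_mTE hS hsub gq)|exact: (version_mT hS hsub (D:=C) hYc)].
  - by have := version_uniq hS hsub hY hYc; apply: filterS => t -> _.
pose qp t := Num.max (q t) 0. pose qm t := Num.max (- q t) 0.
have gqp : Gmeasurable S qp.
  by apply/(GmeasP hS); apply: measurable_maxr => //; exact/(GmeasP hS).
have gqm : Gmeasurable S qm.
  apply/(GmeasP hS); apply: measurable_maxr => //.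
  by apply: measurableT_comp => //; exact/(GmeasP hS).
have qp0 t : 0 <= qp t by exact: maxp_ge0.
have qm0 t : 0 <= qm t by exact: maxp_ge0.
have iqC : P.-integrable C (EFin \o q) by exact: integrableS iq.
have iX' (u : T -> R) : measurable_fun setT u -> (forall t, `|u t| <= `|q t|) ->
    P.-integrable C (fun t => (u t)%:E * (X t)%:E)%E.
  move=> mu hu; apply: le_integrable iqC; [exact: mC| |move=> t _].
    apply: emeasurable_funM; apply/measurable_EFinP; exact: measurable_funTS.
  rewrite -EFinM !abse_EFin lee_fin normrM.
  case/andP: (X01 t) => a b; rewrite (ger0_norm a).
  by apply: le_trans (hu t); apply: ler_piMr.
have ipX := iX' qp (Gmeas_mT hS hsub gqp) (fun t => maxp_le (q t)).
have imX := iX' qm (Gmeas_mT hS hsub gqm)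
  (fun t => ltac:(by rewrite -(normrN (q t)) maxp_le)).
have iY (u : T -> R) : Gmeasurable S u -> (forall t, 0 <= u t) ->
    P.-integrable C (fun t => (u t)%:E * (X t)%:E)%E ->
    P.-integrable C (fun t => (u t)%:E * (Yc t)%:E)%E.
  move=> gu u0 iuX; apply/integrableP; split.
    by apply: emeasurable_funM; [exact: (Gmeas_mTE hS hsub gu)|exact: (version_mT hS hsub (D:=C) hYc)].
  rewrite (eq_integral (fun t => (u t)%:E * (Yc t)%:E))%E; last first.
    by move=> t _; rewrite gee0_abs // -EFinM lee_fin mulr_ge0.
  rewrite (po u gu u0 C SC).
  have -> : (\int[P]_(t in C) ((u t)%:E * (X t)%:E) =
     \int[P]_(t in C) `|(u t)%:E * (X t)%:E|)%E.
    by apply: eq_integral => t _; rewrite gee0_abs // -EFinM lee_fin mulr_ge0.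
  by case/integrableP: iuX.
transitivity (\int[P]_(t in C)
  ((fun t => (qp t)%:E * (Yc t)%:E) \- (fun t => (qm t)%:E * (Yc t)%:E))%E t)%E.
  by apply: eq_integral => t _; rewrite /= -!EFinM -EFinB -mulrBl -maxpm.
rewrite integralB //; [|exact: (iY qp gqp qp0 ipX)|exact: (iY qm gqm qm0 imX)].
rewrite (po qp gqp qp0 C SC) (po qm gqm qm0 C SC) -integralB //.
by apply: eq_integral => t _; rewrite /= -!EFinM -EFinB -mulrBl -maxpm.
Qed.
End signed.


Section realaux2.
Context (R : realType).
Lemma clip01 (a : R) : 0 <= Num.min (Num.max a 0) 1 <= 1.
Proof. by rewrite le_min le_max ge_min !lexx ler01 !orbT. Qed.
Lemma clip_id (a : R) : 0 < a < 1 -> Num.min (Num.max a 0) 1 = a.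
Proof. by case/andP => a0 a1; rewrite max_l ?ltW// min_l ?ltW. Qed.
Lemma ind01 (U : Type) (A : set U) (u : U) : 0 <= (\1_A u : R) <= 1.
Proof. by rewrite indicE; case: (u \in A); rewrite ?lexx ?ler01. Qed.
End realaux2.

Section main.
Context (d : measure_display) (T : measurableType d) (R : realType)
  (P : probability T R) (G : nat)
  (dX : measure_display) (X : measurableType dX)
  (dY : measure_display) (Y : measurableType dY) (W : Type)
  (x : T -> X) (ws : 'I_G -> W) (Z : T -> 'I_G)
  (r : 'I_G -> T -> R) (beta : X -> W -> R)
  (e : 'I_G -> X -> R) (f : X -> Y).
Hypotheses (mx : measurable_fun setT x) (mf : measurable_fun setT f)
  (me : forall g, measurable_fun setT (e g))
  (mbeta : forall g, measurable_fun setT (fun a => beta a (ws g)))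
  (mZ : forall g, measurable [set t | Z t = g])
  (ir : forall g, P.-integrable setT (EFin \o r g))
  (Hign : ignorable_aliasing P x Z r beta ws)
  (He : forall g, cond_prob_version P (sigma_of x) [set t | Z t = g] (e g \o x)).

Local Notation Sx := (sigma_of x).
Local Notation Sef := (sigma_ef x e f).

Lemma hSx : sigma_algebra setT Sx.
Proof.
have -> : Sx = preimage_set_system setT x measurable.
  by apply/seteqP; split => A [B mB <-]; exists B => //; rewrite setTI.
exact/sigma_algebra_preimage/sigma_algebra_measurable.
Qed.

Lemma hSxsub : Sx `<=` measurable.
Proof. by move=> A [B mB <-]; rewrite -(setTI (x @^-1` B)); exact: (mx measurableT mB). Qed.

Lemma hSef : sigma_algebra setT Sef.
Proof. exact: smallest_sigma_algebra. Qed.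

Lemma Sef_Sx : Sef `<=` Sx.
Proof.
apply: smallest_sub; first exact: hSx.
move=> A [[g [B [mB ->]]]|[B [mB ->]]].
- exists (e g @^-1` B) => //.
  by rewrite -(setTI (e g @^-1` B)); exact: (me g measurableT mB).
- exists (f @^-1` B) => //.
  by rewrite -(setTI (f @^-1` B)); exact: (mf measurableT mB).
Qed.

Lemma hSefsub : Sef `<=` measurable.
Proof. by move=> A /Sef_Sx /hSxsub. Qed.

Lemma Gmeas_mono (S1 S2 : set (set T)) (Yf : T -> R) : S1 `<=` S2 ->
  Gmeasurable S1 Yf -> Gmeasurable S2 Yf.
Proof. by move=> h g B mB; apply: h; exact: g. Qed.

Lemma version_sub (S1 S2 : set (set T)) (Xf Yf : T -> R) : S1 `<=` S2 ->
  Gmeasurable S1 Yf -> cond_exp_version P S2 Xf Yf ->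
  cond_exp_version P S1 Xf Yf.
Proof. by move=> h g [_ i hh]; split => // A SA; apply: hh; exact: h. Qed.

Lemma gE g : Gmeasurable Sef (e g \o x).
Proof. by move=> B mB; apply: sub_sigma_algebra; left; exists g; exists B. Qed.

Lemma mr g : measurable_fun setT (r g).
Proof. by apply/measurable_EFinP; exact: measurable_int (ir g). Qed.

Lemma mrho g : measurable_fun setT (fun t => r g t - beta (x t) (ws g)).
Proof.
apply: measurable_funB; first exact: mr.
exact: (measurableT_comp (mbeta g) mx).
Qed.

Lemma resid_meas A : sigma_resid x r beta ws A -> measurable A.
Proof.
move: A; apply: smallest_sub; first exact: sigma_algebra_measurable.
move=> A [g [B [mB ->]]]; rewrite -(setTI (_ @^-1` B)).
exact: (mrho g measurableT mB).
Qed.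

Lemma Z_meas A : sigma_Z Z A -> measurable A.
Proof.
case=> S1 _ <-.
have -> : Z @^-1` S1 = \bigcup_(g in S1) [set t | Z t = g].
  apply/seteqP; split => [t S1Zt|t [g S1g /= Ztg]]; first by exists (Z t).
  by rewrite /preimage /= Ztg.
by apply: fin_bigcup_measurable => //; exact: finite_finset.
Qed.

Lemma integrable_ae (u v : T -> R) : {ae P, forall t, u t = v t} ->
  measurable_fun setT u -> P.-integrable setT (EFin \o v) ->
  P.-integrable setT (EFin \o u).
Proof.
move=> huv mu iv; apply/integrableP; split; first exact/measurable_EFinP.
have -> : (\int[P]_(t in setT) `|(EFin \o u) t| =
           \int[P]_(t in setT) `|(EFin \o v) t|)%E.
  apply: ae_eq_integral => //.
  - by apply: measurableT_comp => //; exact/measurable_EFinP.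
  - by apply: measurableT_comp => //; exact: measurable_int iv.
  - by apply: filterS huv => t /= ->.
by case/integrableP: iv.
Qed.

Definition Ec g t := Num.min (Num.max (e g (x t)) 0) 1.

Lemma Ec01 g t : 0 <= Ec g t <= 1.
Proof. exact: clip01. Qed.

Lemma Epos g : {ae P, forall t, 0 < e g (x t) < 1}.
Proof. exact: (Hign.2 g (e g \o x) (He g)). Qed.

Lemma EcE g : {ae P, forall t, Ec g t = e g (x t)}.
Proof. by apply: filterS (Epos g) => t h; exact: clip_id. Qed.

Lemma Ecpos g : {ae P, forall t, 0 < Ec g t}.
Proof.
have := EcE g; apply: filterS2 (Epos g) => t /andP[h _] ->; exact: h.
Qed.

Lemma gEc g : Gmeasurable Sef (Ec g).
Proof.
apply/(GmeasP hSef); apply: measurable_minr; last exact: measurable_cst.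
apply: measurable_maxr; last exact: measurable_cst.
by apply/(GmeasP hSef); exact: gE.
Qed.

Lemma iEc g : P.-integrable setT (EFin \o Ec g).
Proof.
have i1 : P.-integrable setT (EFin \o cst (1:R)).
  exact: finite_measure_integrable_cst.
apply: le_integrable i1; [by []| |move=> t _].
  exact/measurable_EFinP/(Gmeas_mT hSef hSefsub (gEc g)).
change (`|(Ec g t)%:E| <= `|(1:R)%:E|)%E.
rewrite !abse_EFin lee_fin normr1 ger0_norm; case/andP: (Ec01 g t) => //.
Qed.

Lemma hEcx g : cond_prob_version P Sx [set t | Z t = g] (Ec g).
Proof.
split.
- exact: Gmeas_mono Sef_Sx (gEc g).
- exact: iEc.
- move=> C SC; case: (He g) => _ _ h; rewrite -h //.
  apply: ae_eq_integral => //.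
  + exact: hSxsub.
  + by apply/measurable_EFinP; apply: measurable_funTS; exact: (Gmeas_mT hSef hSefsub (gEc g)).
  + apply/measurable_EFinP; apply: measurable_funTS.
    exact: (measurableT_comp (me g) mx).
  + by apply: filterS (EcE g) => t -> _.
Qed.

Lemma hEcef g : cond_prob_version P Sef [set t | Z t = g] (Ec g).
Proof. exact: version_sub Sef_Sx (gEc g) (hEcx g). Qed.

Lemma HX (q : T -> R) (A1 A2 C : set T) : sigma_Z Z A1 ->
  sigma_resid x r beta ws A2 ->
  (forall t, 0 <= q t) -> cond_prob_version P Sx A1 q -> Sx C ->
  P (C `&` (A1 `&` A2)) = (\int[P]_(t in C) ((q t)%:E * (\1_A2 t)%:E))%E.
Proof.
move=> hA1 hA2 q0 hq SC.
have mA2 := resid_meas hA2.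
have i2 : P.-integrable setT (EFin \o (\1_A2 : T -> R)) by exact: integrable_indic.
have ind0 : forall t, 0 <= (\1_A2 t : R) by move=> t; rewrite indicE ler0n.
have [s [hs s0 po]] := version_ge0 hSx hSxsub ind0 i2.
have := Hign.1 A1 A2 hA1 hA2 q s hq hs; case=> _ _ h.
have gq : Gmeasurable Sx q by case: hq.
rewrite -(po q gq q0 C SC) int_EFinM (h C SC) integral_indic;
  first by rewrite setIC.
all: by [exact: measurableI (Z_meas hA1) mA2 | exact: hSxsub].
Qed.

Definition Qf (S1 : set 'I_G) t := \sum_(g < G) \1_S1 g * Ec g t.

Lemma Q0 S1 t : 0 <= Qf S1 t.
Proof.
apply: sumr_ge0 => g _; apply: mulr_ge0.
- by case/andP: (ind01 R S1 g).
- by case/andP: (Ec01 g t).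
Qed.

Lemma Qle S1 t : Qf S1 t <= G%:R.
Proof.
have -> : (G%:R : R) = \sum_(g < G) (1 : R) by rewrite sumr_const card_ord.
apply: ler_sum => g _.
case/andP: (ind01 R S1 g) => a b; case/andP: (Ec01 g t) => c d'.
exact: mulr_ile1.
Qed.

Lemma gQ S1 : Gmeasurable Sef (Qf S1).
Proof.
apply/(GmeasP hSef); apply: measurable_sum => g.
apply: measurable_funM; first exact: measurable_cst.
by apply/(GmeasP hSef); exact: gEc.
Qed.

Lemma iQ S1 : P.-integrable setT (EFin \o Qf S1).
Proof.
have i1 : P.-integrable setT (EFin \o cst (G%:R : R)).
  exact: finite_measure_integrable_cst.
apply: le_integrable i1; [by []| |move=> t _].
  exact/measurable_EFinP/(Gmeas_mT hSef hSefsub (gQ S1)).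
change (`|(Qf S1 t)%:E| <= `|(G%:R : R)%:E|)%E.
by rewrite !abse_EFin lee_fin (ger0_norm (Q0 S1 t)) ger0_norm ?ler0n// Qle.
Qed.

Lemma hQ S1 : cond_prob_version P Sx (Z @^-1` S1) (Qf S1).
Proof.
split.
- exact: Gmeas_mono Sef_Sx (gQ S1).
- exact: iQ.
move=> C SC; have mC := hSxsub SC.
transitivity (\sum_(g < G) \int[P]_(w in C) ((\1_S1 g * Ec g w)%:E))%E.
  rewrite -ge0_integral_sum //.
  - by apply: eq_integral => t _; rewrite /Qf sumEFin.
  - move=> g; apply/measurable_EFinP; apply: measurable_funTS.
    apply: measurable_funM; first exact: measurable_cst.
    exact: (Gmeas_mT hSef hSefsub (gEc g)).
  - move=> g t _; rewrite lee_fin; apply: mulr_ge0.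
    + by case/andP: (ind01 R S1 g).
    + by case/andP: (Ec01 g t).
transitivity (\sum_(g < G)
   \int[P]_(w in C) ((\1_S1 g * \1_[set t | Z t = g] w)%:E))%E.
  apply: eq_bigr => g _.
  have i1 : P.-integrable C (EFin \o Ec g).
    exact: integrableS (iEc g).
  have i2 : P.-integrable C (EFin \o (\1_[set t | Z t = g] : T -> R)).
    by apply: integrableS (integrable_indic _ (mZ g)).
  rewrite (_ : (fun w => (\1_S1 g * Ec g w)%:E) =
     (fun w => (\1_S1 g)%:E * (EFin \o Ec g) w))%E //.
  rewrite integralZl //.
  case: (hEcx g) => _ _ -> //.
  rewrite -integralZl //.
rewrite -ge0_integral_sum //;
  try (by move=> g; apply/measurable_EFinP; apply: measurable_funTS;
        apply: measurable_funM; [exact: measurable_cst|exact: measurable_indic]);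
  try (by move=> g t _; rewrite lee_fin; apply: mulr_ge0;
        [case/andP: (ind01 R S1 g)|case/andP: (ind01 R [set t | Z t = g] t)]).
apply: eq_integral => t _; rewrite sumEFin; congr EFin.
rewrite (bigD1 (Z t)) //= big1 ?addr0.
  have -> : \1_[set u | Z u = Z t] t = 1 :> R by rewrite indicE mem_set.
  by rewrite mulr1 !indicE.
move=> g gZ; have -> : \1_[set u | Z u = g] t = 0 :> R.
  rewrite indicE memNset ?mulr0 //= => Ztg.
  by move: gZ; rewrite Ztg eqxx.
by rewrite mulr0.
Qed.

Lemma part_a : cond_indep P (sigma_Z Z) (sigma_resid x r beta ws) Sef.
Proof.
move=> A1 A2 hA1 hA2 p1 p2 hp1 hp2.
have hA1' := hA1; case: hA1' => S1 _ eA1.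
have mA2 := resid_meas hA2.
have i2 : P.-integrable setT (EFin \o (\1_A2 : T -> R)) by exact: integrable_indic.
have ind0 t : 0 <= (\1_A2 t : R) by rewrite indicE ler0n.
have [s [hs s0 po]] := version_ge0 hSef hSefsub ind0 i2.
have hQx : cond_prob_version P Sx A1 (Qf S1) by rewrite -eA1; exact: hQ.
have hQef : cond_prob_version P Sef A1 (Qf S1).
  exact: version_sub Sef_Sx (gQ S1) hQx.
have e1 := version_uniq hSef hSefsub hp1 hQef.
have e2 := version_uniq hSef hSefsub hp2 hs.
have g1 : Gmeasurable Sef p1 by case: hp1.
have g2 : Gmeasurable Sef p2 by case: hp2.
have gs : Gmeasurable Sef s by case: hs.
have is' : P.-integrable setT (EFin \o s) by case: hs.
have gp : Gmeasurable Sef (p1 \* p2).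
  by apply/(GmeasP hSef); apply: measurable_funM; exact/(GmeasP hSef).
have aeq : {ae P, forall t, (p1 \* p2) t = Qf S1 t * s t}.
  by move: e2; apply: filterS2 e1 => t /= -> ->.
have iQs : P.-integrable setT (EFin \o (fun t => Qf S1 t * s t)).
  have iGs : P.-integrable setT (fun t => (G%:R : R)%:E * (EFin \o s) t)%E.
    by apply: integrableZl.
  apply: le_integrable iGs; [by []| |move=> t _].
    apply/measurable_EFinP; apply: measurable_funM.
    + exact: (Gmeas_mT hSef hSefsub (gQ S1)).
    + exact: (Gmeas_mT hSef hSefsub gs).
  change (`|(Qf S1 t * s t)%:E| <= `|(G%:R : R)%:E * (s t)%:E|)%E.
  rewrite -EFinM !abse_EFin lee_fin !normrM ler_wpM2r //.
  by rewrite (ger0_norm (Q0 S1 t)) ger0_norm ?ler0n// Qle.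
split => //.
- apply: integrable_ae aeq _ iQs.
  exact: (Gmeas_mT hSef hSefsub gp).
- move=> B SB; have mB := hSefsub SB.
  transitivity (\int[P]_(w in B) ((Qf S1 w)%:E * (s w)%:E))%E.
    rewrite int_EFinM; apply: ae_eq_integral => //.
    + apply/measurable_EFinP; apply: measurable_funTS.
      exact: (Gmeas_mT hSef hSefsub gp).
    + apply/measurable_EFinP; apply: measurable_funTS; apply: measurable_funM.
      * exact: (Gmeas_mT hSef hSefsub (gQ S1)).
      * exact: (Gmeas_mT hSef hSefsub gs).
    + by apply: filterS aeq => t /= -> _.
  rewrite (po (Qf S1) (gQ S1) (Q0 S1) B SB).
  rewrite -(HX hA1 hA2 (Q0 S1) hQx (Sef_Sx SB)).
  rewrite integral_indic; first by rewrite setIC.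
  all: by [exact: measurableI (Z_meas hA1) mA2 | exact: mB].
Qed.

Lemma part_b g p : cond_prob_version P Sef [set t | Z t = g] p ->
  {ae P, forall t, 0 < p t < 1}.
Proof.
move=> hp; have h := version_uniq hSef hSefsub hp (hEcef g).
have h4 : {ae P, forall t, p t = e g (x t)}.
  by move: (EcE g); apply: filterS2 h => t -> ->.
by move: (Epos g); apply: filterS2 h4 => t ->.
Qed.

Lemma CI g C : Sx C ->
  (\int[P]_(t in C `&` [set t | Z t = g]) (r g t)%:E =
   \int[P]_(t in C) ((Ec g t)%:E * (r g t)%:E))%E.
Proof.
move=> SC.
pose rho := fun t => r g t - beta (x t) (ws g).
have mrho' : measurable_fun setT rho := mrho g.
pose G0 : set (set T) := [set A | exists (B0 : set X), exists (D : set R),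
  [/\ measurable B0, measurable D & A = x @^-1` B0 `&` rho @^-1` D]].
have G0sub : <<s G0 >> `<=` measurable.
  apply: smallest_sub; first exact: sigma_algebra_measurable.
  move=> _ [B0 [D [mB0 mD ->]]]; apply: measurableI.
  - by rewrite -(setTI (x @^-1` B0)); exact: (mx measurableT mB0).
  - by have := mrho' measurableT D mD; rewrite setTI.
pose id3 : T -> (g_sigma_algebraType G0) := id.
have mid3 : measurable_fun setT id3.
  by move=> _ B mB; rewrite setTI; exact: G0sub.
have mZg := mZ g.
have ind0 t : 0 <= (\1_[set t | Z t = g] t : R) by rewrite indicE ler0n.
have iind : P.-integrable setT (EFin \o (\1_[set t | Z t = g] : T -> R)).
  exact: integrable_indic.
have Ec0 t : 0 <= Ec g t by case/andP: (Ec01 g t).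
pose l1 := pf (dens ind0 iind) mid3.
pose l2 := pf (dens Ec0 (iEc g)) mid3.
have eql : forall A : set (g_sigma_algebraType G0), measurable A -> l1 A = l2 A.
  apply: (measure_unique (G0 : set (set (g_sigma_algebraType G0))) (fun _ => setT)) => //.
  - move=> _ _ [B0 [D [mB0 mD ->]]] [B1 [D1 [mB1 mD1 ->]]].
    exists (B0 `&` B1); exists (D `&` D1); split; try exact: measurableI.
    by rewrite !preimage_setI setIACA.
  - by exists setT; exists setT; split => //; rewrite !preimage_setT setIT.
  - by apply/seteqP; split => // t _; exists 0%N.
  - move=> _ [B0 [D [mB0 mD ->]]].
    have hx : Sx (x @^-1` B0) by exists B0.
    have hZ : sigma_Z Z [set t | Z t = g] by exists [set g].
    have hR : sigma_resid x r beta ws (rho @^-1` D).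
      by apply: sub_sigma_algebra; exists g; exists D.
    have mA : measurable (x @^-1` B0 `&` rho @^-1` D).
      by apply: G0sub; apply: sub_sigma_algebra; exists B0; exists D.
    transitivity (P ([set t | Z t = g] `&` (x @^-1` B0 `&` rho @^-1` D))).
      by rewrite /l1 /pf /=; unfold dens; rewrite integral_indic.
    transitivity (\int[P]_(t in x @^-1` B0 `&` rho @^-1` D) (Ec g t)%:E)%E;
      last by [].
    by rewrite setICA (HX hZ hR Ec0 (hEcx g) hx) int_indic_setI.
  - move=> _; rewrite -ge0_fin_numE ?measure_ge0//.
    exact: fin_num_measure.
have mC : measurable C := hSxsub SC.
have C3 : (measurable : set (set (g_sigma_algebraType G0))) C.
  case: SC => B0 mB0 <-; apply: sub_sigma_algebra; exists B0; exists setT.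
  by split => //; rewrite preimage_setT setIT.
have mr3 : measurable_fun setT (r g : (g_sigma_algebraType G0) -> R).
  have -> : (r g : (g_sigma_algebraType G0) -> R) = (fun t => rho t + beta (x t) (ws g)).
    by apply/funext => t; rewrite /rho subrK.
  apply: measurable_funD.
  - move=> _ D mD; rewrite setTI; apply: sub_sigma_algebra.
    by exists setT; exists D; split => //; rewrite preimage_setT setTI.
  - move=> _ D mD; rewrite setTI; apply: sub_sigma_algebra.
    exists ((fun a => beta a (ws g)) @^-1` D); exists setT; split => //.
      by have := mbeta g measurableT mD; rewrite setTI.
    by rewrite preimage_setT setIT.
have mEr3 : measurable_fun setT (EFin \o (r g : (g_sigma_algebraType G0) -> R)).
  exact/measurable_EFinP.
have iq1 : P.-integrable C (fun t => (r g t * \1_[set t | Z t = g] t)%:E).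
  have mI : measurable_fun setT (\1_[set t | Z t = g] : T -> R).
    by apply: measurable_indic.
  have i0 := int_mul_bounded mC (ir g) mI (ind01 R _).
  apply: eq_integrable i0; try exact: mC.
  by move=> t _; rewrite /= -EFinM mulrC.
have iq2 : P.-integrable C (fun t => (r g t * Ec g t)%:E).
  have i0 := int_mul_bounded mC (ir g) (Gmeas_mT hSef hSefsub (gEc g)) (Ec01 g).
  apply: eq_integrable i0; try exact: mC.
  by move=> t _; rewrite /= -EFinM mulrC.
have [d1i d1e] := dens_int ind0 iind mC (mr g) iq1.
have [d2i d2e] := dens_int Ec0 (iEc g) mC (mr g) iq2.
rewrite int_indic_setI int_EFinM -d1e.
transitivity (\int[l1]_(t in C) (r g t)%:E)%E.
  by symmetry; rewrite /l1; apply: pf_integral.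
rewrite (eq_measure_integral l2); last by move=> A mA _; exact: eql.
transitivity (\int[dens Ec0 (iEc g)]_(t in C) (r g t)%:E)%E.
  by rewrite /l2; apply: pf_integral.
rewrite d2e -int_EFinM; apply: eq_integral => t _; exact: muleC.
Qed.

Lemma int_lin (u : 'I_G -> T -> R) (c : 'I_G -> R) (B : set T) :
  measurable B -> (forall g, P.-integrable setT (EFin \o u g)) ->
  (\int[P]_(t in B) (\sum_(g < G) c g * u g t)%:E =
   \sum_(g < G) (c g)%:E * \int[P]_(t in B) (u g t)%:E)%E.
Proof.
move=> mB iu.
transitivity (\int[P]_(t in B) (\sum_(g < G) ((c g)%:E * (EFin \o u g) t)))%E.
  by apply: eq_integral => t _; rewrite -sumEFin.
have iB g : P.-integrable B (EFin \o u g).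
  exact: (integrableS measurableT mB (subsetT _) (iu g)).
rewrite integral_sum //; last by move=> g; apply: integrableZl.
by apply: eq_bigr => g _; rewrite integralZl.
Qed.

Lemma part_c_g g (m : T -> R) :
  cond_exp_event_version P Sef [set t | Z t = g] (fun t => r (Z t) t) m ->
  P.-integrable setT (EFin \o m) /\
  forall B, Sef B ->
    (\int[P]_(t in B) (m t)%:E = \int[P]_(t in B) (r g t)%:E)%E.
Proof.
case=> gm im hm.
have [k [hk pok]] := version_signed hSef hSefsub (ir g).
have hk' := hk; case: hk' => gk ik hkk.
have mZg := mZ g.
have ind0 t : 0 <= (\1_[set t | Z t = g] t : R) by rewrite indicE ler0n.
have iind : P.-integrable setT (EFin \o (\1_[set t | Z t = g] : T -> R)).
  exact: integrable_indic.
have hmk : {ae P, forall t, m t = k t}.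
  apply: (EU hSef hSefsub mZg) => //.
  - move=> C SC h0; case: (hEcef g) => _ _ hE.
    have hint : (\int[P]_(t in C) (Ec g t)%:E = 0)%E.
      rewrite (hE C SC) integral_indic; first by rewrite setIC; exact: h0.
      all: try (by [exact: mZg | exact: (hSefsub SC)]).
    apply: (pos_int0 (hSefsub SC) _ _ hint).
    + apply: measurable_funTS; exact: (Gmeas_mT hSef hSefsub (gEc g)).
    + by apply: filterS (Ecpos g) => t h _.
  - exact: (integrableS measurableT mZg (subsetT _) ik).
  - move=> B SB; rewrite hm //.
    have mB := hSefsub SB.
    have SBx := Sef_Sx SB.
    transitivity (\int[P]_(t in B `&` [set t | Z t = g]) (r g t)%:E)%E.
      by apply: eq_integral => t /set_mem [_ /= ->].
    rewrite (CI g SBx) int_indic_setI.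
    rewrite -(po_ind hSx hSxsub (ind01 R _) iind (hEcx g)
                (Gmeas_mono Sef_Sx gk) ik SBx).
    rewrite -(pok (Ec g) (gEc g) (Ec01 g) B SB).
    by apply: eq_integral => t _; exact: muleC.
have im' : P.-integrable setT (EFin \o m).
  exact: integrable_ae hmk (Gmeas_mT hSef hSefsub gm) ik.
split => // B SB; have mB := hSefsub SB.
rewrite -(hkk B SB); apply: ae_eq_integral => //.
- by apply/measurable_EFinP; apply: measurable_funTS; exact: (Gmeas_mT hSef hSefsub gm).
- by apply/measurable_EFinP; apply: measurable_funTS; exact: (Gmeas_mT hSef hSefsub gk).
- by apply: filterS hmk => t -> _.
Qed.

Lemma part_c (h : 'I_G -> R) (m : 'I_G -> T -> R) :
  (forall g, cond_exp_event_version P Sef [set t | Z t = g]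
               (fun t => r (Z t) t) (m g)) ->
  cond_exp_version P Sef (fun t => \sum_(g < G) h g * r g t)
                         (fun t => \sum_(g < G) h g * m g t).
Proof.
move=> hm.
have H g := part_c_g (hm g).
split.
- apply/(GmeasP hSef); apply: measurable_sum => g.
  apply: measurable_funM; first exact: measurable_cst.
  by case: (hm g) => gm _ _; apply/(GmeasP hSef).
- rewrite (_ : EFin \o _ = fun t => \sum_(g < G) ((h g)%:E * (EFin \o m g) t))%E;
    last by apply/funext => t; rewrite /= -sumEFin.
  apply: integrable_sum => //.
  by move=> g _; apply: integrableZl => //; exact: (H g).1.
- move=> B SB; have mB := hSefsub SB.
  rewrite !int_lin //; first by apply: eq_bigr => g _; rewrite ((H g).2 B SB).
  by move=> g; exact: (H g).1.
Qed.

End main.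

Unset Implicit Arguments. Set Strict Implicit.

Theorem proposition3
  (d : measure_display) (T : measurableType d) (R : realType)
  (P : probability T R) (G : nat)
  (dX : measure_display) (X : measurableType dX)
  (dY : measure_display) (Y : measurableType dY) (W : Type)
  (x : T -> X) (w : T -> W) (ws : 'I_G -> W) (Z : T -> 'I_G)
  (r : 'I_G -> T -> R) (beta : X -> W -> R)
  (e : 'I_G -> X -> R) (f : X -> Y)
  (mx : measurable_fun setT x)
  (mf : measurable_fun setT f)
  (me : forall g, measurable_fun setT (e g))
  (mbeta : forall g, measurable_fun setT (fun a => beta a (ws g)))
  (mZ : forall g, measurable [set t | Z t = g])
  (ir : forall g, P.-integrable setT (EFin \o r g))
  (ws_inj : injective ws)
  (Zw : forall t g, Z t = g <-> w t = ws g)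
  (Hign : ignorable_aliasing P x Z r beta ws)
  (He : forall g, cond_prob_version P (sigma_of x) [set t | Z t = g] (e g \o x)) :
  (* (a) *)
  cond_indep P (sigma_Z Z) (sigma_resid x r beta ws) (sigma_ef x e f) /\
  (* (b) *)
  (forall g : 'I_G, forall p : T -> R,
     cond_prob_version P (sigma_ef x e f) [set t | Z t = g] p ->
     {ae P, forall t, 0 < p t < 1}) /\
  (* (c) *)
  (forall h : 'I_G -> R,
     \sum_(g < G) h g = 0 -> (exists g, h g != 0) -> not_aliased h beta ws ->
     forall m : 'I_G -> T -> R,
       (forall g, cond_exp_event_version P (sigma_ef x e f) [set t | Z t = g]
                    (fun t => r (Z t) t) (m g)) ->
       cond_exp_version P (sigma_ef x e f)
         (fun t => \sum_(g < G) h g * r g t)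
         (fun t => \sum_(g < G) h g * m g t)).
Proof.
split; first by apply: part_a.
split; first by move=> g p hp; exact: (part_b mx mf me Hign He hp).
by move=> h _ _ _ m hm; exact: (part_c mx mf me mbeta mZ ir Hign He h hm).
Qed.
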